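(* Let $\gamma>0$. The set $\mathcal{G}_\gamma$ has two path-connected components, namely $\mathcal{G}_\gamma^+=\{(X,Y,\hat A,\hat B,\hat C,\hat D,\Pi,\Xi)\in\mathcal{G}_\gamma:\det\Pi>0\}$ and $\mathcal{G}_\gamma^-=\{(X,Y,\hat A,\hat B,\hat C,\hat D,\Pi,\Xi)\in\mathcal{G}_\gamma:\det\Pi<0\}$.
   Context: Consider real matrices $A\in\mathbb{R}^{n_x\times n_x}$, $B_1\in\mathbb{R}^{n_x\times n_w}$, $B_2\in\mathbb{R}^{n_x\times n_u}$, $C_1\in\mathbb{R}^{n_z\times n_x}$, $C_2\in\mathbb{R}^{n_y\times n_x}$, $D_{11}\in\mathbb{R}^{n_z\times n_w}$, $D_{12}\in\mathbb{R}^{n_z\times n_u}$, $D_{21}\in\mathbb{R}^{n_y\times n_w}$ (the data of the plant $\dot x=Ax+B_1w+B_2u$, $z=C_1x+D_{11}w+D_{12}u$, $y=C_2x+D_{21}w$), with $(A,B_2)$ stabilizable and $(C_2,A)$ detectable. For $X,Y\in\mathbb{S}^{n_x}$, $\hat A\in\mathbb{R}^{n_x\times n_x}$, $\hat B\in\mathbb{R}^{n_x\times n_y}$, $\hat C\in\mathbb{R}^{n_u\times n_x}$, $\hat D\in\mathbb{R}^{n_u\times n_y}$, let $M_\gamma$ be the symmetric $4\times4$ block matrix with $M_{11}=AX+XA^T+B_2\hat C+(B_2\hat C)^T$, $M_{12}=\hat A^T+A+B_2\hat DC_2$, $M_{13}=B_1+B_2\hat DD_{21}$, $M_{14}=(C_1X+D_{12}\hat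 C)^T$, $M_{22}=A^TY+YA+\hat BC_2+(\hat BC_2)^T$, $M_{23}=YB_1+\hat BD_{21}$, $M_{24}=(C_1+D_{12}\hat DC_2)^T$, $M_{33}=-\gamma I$, $M_{34}=(D_{11}+D_{12}\hat DD_{21})^T$, $M_{44}=-\gamma I$. $\mathcal{F}_\gamma$ is the set of $(X,Y,\hat A,\hat B,\hat C,\hat D)$ with $\begin{bmatrix}X& I\\ I& Y\end{bmatrix}\succ0$ and $M_\gamma\prec0$; $\mathcal{G}_\gamma$ is the set of $(X,Y,\hat A,\hat B,\hat C,\hat D,\Pi,\Xi)$ with $(X,\dots,\hat D)\in\mathcal{F}_\gamma$, $\Pi,\Xi\in\mathbb{R}^{n_x\times n_x}$ and $\Xi\Pi=I-YX$.
   Formalization: The state dimension $n_x$ is taken to be positive, and $\mathcal{F}_\gamma$ is assumed nonempty. The statement above fails without it. *)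

(* Defs.v *)
From mathcomp Require Import all_boot all_order all_algebra.
From mathcomp Require Import all_classical all_reals all_analysis.
Set Implicit Arguments. Unset Strict Implicit. Unset Printing Implicit Defensive.
Import Order.TTheory GRing.Theory Num.Theory numFieldNormedType.Exports.
Local Open Scope classical_set_scope.
Local Open Scope ring_scope.

Section Defs.
Variable R : realType.

Definition posdef (n : nat) (M : 'M[R]_n) : Prop :=
  M^T = M /\ forall v : 'cV[R]_n, v != 0 -> 0 < (v^T *m M *m v) 0 0.

Definition negdef (n : nat) (M : 'M[R]_n) : Prop := posdef (- M).

(** Hurwitz: every (complex) eigenvalue a + i b of A has a < 0.
    A complex eigenvector u + i v (u, v real, not both zero) for the
    eigenvalue a + i b means A u = a u - b v and A v = b u + a v. *)
Definition hurwitz (n : nat) (A : 'M[R]_n) : Prop :=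
  forall (a b : R) (u v : 'cV[R]_n), (u != 0 \/ v != 0) ->
    A *m u = a *: u - b *: v -> A *m v = b *: u + a *: v -> a < 0.

Definition stabilizable (nx nu : nat) (A : 'M[R]_nx) (B : 'M[R]_(nx, nu)) : Prop :=
  exists K : 'M[R]_(nu, nx), hurwitz (A + B *m K).

Definition detectable (nx ny : nat) (C : 'M[R]_(ny, nx)) (A : 'M[R]_nx) : Prop :=
  exists L : 'M[R]_(nx, ny), hurwitz (A + L *m C).

Definition path_in (T : topologicalType) (S : set T) (p q : T) : Prop :=
  exists f : R -> T, {within `[0, 1], continuous f} /\ f 0 = p /\ f 1 = q /\
    (forall t : R, 0 <= t <= 1 -> S (f t)).

Definition path_component (T : topologicalType) (S : set T) (p : T) : set T :=
  [set q | S p /\ path_in S p q].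

Definition is_path_component (T : topologicalType) (S : set T) (C : set T) : Prop :=
  exists p, S p /\ C = path_component S p.

Section Plant.
Variables (nx nw nu nz ny : nat).
Variables (A : 'M[R]_nx) (B1 : 'M[R]_(nx, nw)) (B2 : 'M[R]_(nx, nu))
  (C1 : 'M[R]_(nz, nx)) (C2 : 'M[R]_(ny, nx)) (D11 : 'M[R]_(nz, nw))
  (D12 : 'M[R]_(nz, nu)) (D21 : 'M[R]_(ny, nw)).

Definition Mgamma (gamma : R) (X Y Ah : 'M[R]_nx) (Bh : 'M[R]_(nx, ny))
    (Ch : 'M[R]_(nu, nx)) (Dh : 'M[R]_(nu, ny)) :
    'M[R]_((nx + nx) + (nw + nz)) :=
  let M11 := A *m X + X *m A^T + B2 *m Ch + (B2 *m Ch)^T in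
  let M12 := Ah^T + A + B2 *m Dh *m C2 in
  let M13 := B1 + B2 *m Dh *m D21 in
  let M14 := (C1 *m X + D12 *m Ch)^T in
  let M22 := A^T *m Y + Y *m A + Bh *m C2 + (Bh *m C2)^T in
  let M23 := Y *m B1 + Bh *m D21 in
  let M24 := (C1 + D12 *m Dh *m C2)^T in
  let M33 := - (gamma%:M : 'M[R]_nw) in
  let M34 := (D11 + D12 *m Dh *m D21)^T in
  let M44 := - (gamma%:M : 'M[R]_nz) in
  let TR := block_mx M13 M14 M23 M24 in
  block_mx (block_mx M11 M12 M12^T M22) TR
           TR^T (block_mx M33 M34 M34^T M44).

Definition Fgamma (gamma : R) (X Y Ah : 'M[R]_nx) (Bh : 'M[R]_(nx, ny))
    (Ch : 'M[R]_(nu, nx)) (Dh : 'M[R]_(nu, ny)) : Prop :=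
  X^T = X /\ Y^T = Y /\
  posdef (block_mx X 1%:M 1%:M Y) /\ negdef (Mgamma gamma X Y Ah Bh Ch Dh).

(** Points (X, Y, Ah, Bh, Ch, Dh, Pi, Xi), as left-nested pairs. *)
Definition Gpoint : Type :=
  ('M[R]_nx * 'M[R]_nx * 'M[R]_nx * 'M[R]_(nx, ny) * 'M[R]_(nu, nx)
   * 'M[R]_(nu, ny) * 'M[R]_nx * 'M[R]_nx)%type.

Definition Ggamma (gamma : R) : set Gpoint :=
  [set p | let: (X, Y, Ah, Bh, Ch, Dh, Pi, Xi) := p in
     Fgamma gamma X Y Ah Bh Ch Dh /\ Xi *m Pi = 1%:M - Y *m X].

Definition Ggamma_plus (gamma : R) : set Gpoint :=
  [set p | Ggamma gamma p /\ 0 < \det p.1.2].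

Definition Ggamma_minus (gamma : R) : set Gpoint :=
  [set p | Ggamma gamma p /\ \det p.1.2 < 0].

End Plant.
End Defs.

(* Main.v *)
Require Import Defs.
From mathcomp Require Import all_boot all_order all_algebra.
From mathcomp Require Import all_classical all_reals all_analysis.
From mathcomp Require Import ring lra.
Import Order.TTheory GRing.Theory Num.Theory numFieldNormedType.Exports.
Local Open Scope classical_set_scope.
Local Open Scope ring_scope.
Set Implicit Arguments. Unset Strict Implicit.

Section Aux.
Context {R : realType}.

Lemma mx_cont m n (T : topologicalType) (f : T -> 'M[R]_(m,n)) :
  (forall i j, continuous (fun t => f t i j)) -> continuous f.
Proof.
move=> H x A [P /= Pn PA].
have : \forall t \near x, forall i j, P i j (f t i j).
  apply: filter_forall => i; apply: filter_forall => j.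
  exact: (H i j x _ (Pn i j)).
by apply: filterS => t Ht; apply: PA.
Qed.

Lemma mx_entry_cont m n (T : topologicalType) (f : T -> 'M[R]_(m,n)) i j :
  continuous f -> continuous (fun t => f t i j).
Proof.
move=> fc x.
exact: (continuous_comp (fc x) (@coord_continuous R m n i j (f x))).
Qed.

Lemma sum_cont (T : topologicalType) (I : Type) (r : seq I) (P : pred I)
  (F : I -> T -> R) : (forall i, continuous (F i)) ->
  continuous (fun t => \sum_(i <- r | P i) F i t).
Proof.
move=> Fc; elim: r => [|a r IH].
  under eq_fun do rewrite big_nil; exact: cst_continuous.
under eq_fun do rewrite big_cons; case: (P a) => //.
move=> x; apply: cvgD; [exact: Fc | exact: IH].
Qed.

Lemma prod_cont (T : topologicalType) (I : Type) (r : seq I) (P : pred I)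
  (F : I -> T -> R) : (forall i, continuous (F i)) ->
  continuous (fun t => \prod_(i <- r | P i) F i t).
Proof.
move=> Fc; elim: r => [|a r IH].
  under eq_fun do rewrite big_nil; exact: cst_continuous.
under eq_fun do rewrite big_cons; case: (P a) => //.
move=> x; apply: cvgM; [exact: Fc | exact: IH].
Qed.

End Aux.

Arguments mx_entry_cont {R m n T f} i j.
Arguments mx_cont {R m n T f}.


Section Cont.
Context {R : realType}.
Context {T : topologicalType}.

Lemma cont_cst m n (A : 'M[R]_(m,n)) : continuous (fun _ : T => A).
Proof. exact: cst_continuous. Qed.

Lemma cont_mul m n p (f : T -> 'M[R]_(m,n)) (g : T -> 'M[R]_(n,p)) :
  continuous f -> continuous g -> continuous (fun t => f t *m g t).
Proof.
move=> fc gc; apply: mx_cont => i j; under eq_fun do rewrite mxE.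
apply: sum_cont => k x; apply: cvgM.
  exact: (mx_entry_cont i k fc x).
exact: (mx_entry_cont k j gc x).
Qed.

Lemma cont_add m n (f g : T -> 'M[R]_(m,n)) :
  continuous f -> continuous g -> continuous (fun t => f t + g t).
Proof.
move=> fc gc; apply: mx_cont => i j; under eq_fun do rewrite mxE.
move=> x; apply: cvgD; [exact: (mx_entry_cont i j fc x) | exact: (mx_entry_cont i j gc x)].
Qed.

Lemma cont_opp m n (f : T -> 'M[R]_(m,n)) :
  continuous f -> continuous (fun t => - f t).
Proof.
move=> fc; apply: mx_cont => i j; under eq_fun do rewrite mxE.
move=> x; apply: cvgN; exact: (mx_entry_cont i j fc x).
Qed.

Lemma cont_sub m n (f g : T -> 'M[R]_(m,n)) :
  continuous f -> continuous g -> continuous (fun t => f t - g t).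
Proof. by move=> fc gc; apply: cont_add => //; apply: cont_opp. Qed.

Lemma cont_scale m n (a : T -> R) (f : T -> 'M[R]_(m,n)) :
  continuous a -> continuous f -> continuous (fun t => a t *: f t).
Proof.
move=> ac fc; apply: mx_cont => i j; under eq_fun do rewrite mxE.
move=> x; apply: cvgM; [exact: ac | exact: (mx_entry_cont i j fc x)].
Qed.

Lemma cont_tr m n (f : T -> 'M[R]_(m,n)) :
  continuous f -> continuous (fun t => (f t)^T).
Proof.
move=> fc; apply: mx_cont => i j; under eq_fun do rewrite mxE.
exact: (mx_entry_cont j i fc).
Qed.

Lemma cont_block m1 m2 n1 n2 (a : T -> 'M[R]_(m1,n1)) (b : T -> 'M[R]_(m1,n2))
  (c : T -> 'M[R]_(m2,n1)) (d : T -> 'M[R]_(m2,n2)) :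
  continuous a -> continuous b -> continuous c -> continuous d ->
  continuous (fun t => block_mx (a t) (b t) (c t) (d t)).
Proof.
move=> ac bc cc dc; apply: mx_cont => i j.
rewrite -(splitK i) -(splitK j).
case: (fintype.split i) => i'; case: (fintype.split j) => j' /=.
- under eq_fun do rewrite block_mxEul; exact: mx_entry_cont.
- under eq_fun do rewrite block_mxEur; exact: mx_entry_cont.
- under eq_fun do rewrite block_mxEdl; exact: mx_entry_cont.
- under eq_fun do rewrite block_mxEdr; exact: mx_entry_cont.
Qed.

Lemma cont_det n (f : T -> 'M[R]_n) :
  continuous f -> continuous (fun t => \det (f t)).
Proof.
move=> fc; rewrite /determinant; apply: sum_cont => s x; apply: cvgM.
  exact: cst_continuous.
move: x; apply: prod_cont => i; exact: mx_entry_cont.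
Qed.

Lemma cont_adj n (f : T -> 'M[R]_n) :
  continuous f -> continuous (fun t => \adj (f t)).
Proof.
move=> fc; apply: mx_cont => i j; under eq_fun do rewrite mxE /cofactor.
move=> x; apply: cvgM; first exact: cst_continuous.
apply: cont_det => //; apply: mx_cont => a b; under eq_fun do rewrite !mxE.
exact: mx_entry_cont.
Qed.

Lemma cont_inv n (f : T -> 'M[R]_n) :
  continuous f -> (forall t, \det (f t) != 0) ->
  continuous (fun t => invmx (f t)).
Proof.
move=> fc fd.
have -> : (fun t => invmx (f t)) = (fun t => (\det (f t))^-1 *: \adj (f t)).
  apply: funext => t; rewrite /invmx unitmxE unitfE fd //.
apply: cont_scale; last exact: cont_adj.
move=> x; apply: cvgV => //; exact: cont_det.
Qed.

End Cont.


Section Conn.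
Context {R : realType}.

Lemma id_cont : continuous (fun x : R => x).
Proof. by move=> x; exact: cvg_id. Qed.

Definition conn n (P Q : 'M[R]_n) := exists h : R -> 'M[R]_n,
  continuous h /\ h 0 = P /\ h 1 = Q /\
  forall t, 0 <= t <= 1 -> \det (h t) != 0.
Arguments conn {n}.

Lemma conn_refl n (P : 'M[R]_n) : \det P != 0 -> conn P P.
Proof.
move=> dP; exists (fun _ : R => P); split; first exact: cst_continuous.
by split.
Qed.

Lemma conn_sym n (P Q : 'M[R]_n) : conn P Q -> conn Q P.
Proof.
move=> [h [hc [h0 [h1 hd]]]]; exists (fun t : R => h (1 - t)); split.
  move=> x; apply: (continuous_comp (f := fun t : R => 1 - t)); last exact: hc.
  by apply: cvgB; [exact: cvg_cst | exact: cvg_id].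
rewrite subr0 subrr; split => //; split => // t /andP[t0 t1].
by apply: hd; rewrite subr_ge0 t1 lerBlDr lerDl t0.
Qed.

Definition clamp (t : R) := Num.min (Num.max t 0) 1.

Lemma clamp_cont (f : R -> R) : continuous f ->
  continuous (fun t => clamp (f t)).
Proof.
move=> fc x; rewrite /clamp.
apply: (@continuous_min R R (fun t => Num.max (f t) 0) (fun _ => 1) x).
  apply: (@continuous_max R R f (fun _ => 0) x); first exact: fc.
  exact: cvg_cst.
exact: cvg_cst.
Qed.

Lemma clamp_in t : 0 <= clamp t <= 1.
Proof.
rewrite /clamp; apply/andP; split.
  by rewrite le_min ler01 le_max lexx orbT.
by rewrite ge_min lexx orbT.
Qed.

Lemma clamp_id t : 0 <= t <= 1 -> clamp t = t.
Proof.
move=> /andP[t0 t1]; rewrite /clamp.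
by rewrite (max_idPl t0) (min_idPl t1).
Qed.

Lemma clamp_le0 t : t <= 0 -> clamp t = 0.
Proof. by move=> t0; rewrite /clamp (max_idPr t0) (min_idPl ler01). Qed.

Lemma clamp_ge1 t : 1 <= t -> clamp t = 1.
Proof.
move=> t1; rewrite /clamp (max_idPl (le_trans ler01 t1)) (min_idPr t1) //.
Qed.

Arguments clamp_le0 {t}.
Arguments clamp_ge1 {t}.

Lemma conn_trans n (P Q S : 'M[R]_n) : conn P Q -> conn Q S -> conn P S.
Proof.
move=> [g [gc [g0 [g1 gd]]]] [h [hc [h0 [h1 hd]]]].
exists (fun t : R => g (clamp (2 * t)) + h (clamp (2 * t - 1)) - Q); split.
  apply: cont_sub; last exact: cst_continuous.
  apply: cont_add.
    move=> x; apply: (continuous_comp (f := fun t : R => clamp (2 * t)) _ (gc _)); move: x.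
    apply: clamp_cont => y; apply: cvgM; [exact: cvg_cst | exact: cvg_id].
  move=> x; apply: (continuous_comp (f := fun t : R => clamp (2 * t - 1)) _ (hc _)); move: x.
  apply: clamp_cont => y; apply: cvgB; last exact: cvg_cst.
  apply: cvgM; [exact: cvg_cst | exact: cvg_id].
have e1 : (2 : R) - 1 = 1 by lra.
rewrite mulr0 mulr1 e1 add0r (clamp_le0 (lexx 0)) (clamp_le0 (lerN10 R)).
rewrite (clamp_ge1 (lexx 1)) (clamp_ge1 (_ : 1 <= 2)) ?ler1n //.
rewrite g0 g1 h0 h1 addrK; split => //; split.
  by rewrite addrC addKr.
move=> t /andP[t0 t1]; case: (leP (2 * t) 1) => t2.
  rewrite (clamp_le0 (_ : 2 * t - 1 <= 0)) ?subr_le0 // h0 addrK.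
  by apply: gd; exact: clamp_in.
rewrite (clamp_ge1 (ltW t2)) g1 addrC addKr.
by apply: hd; exact: clamp_in.
Qed.

Lemma conn_mull n (M P Q : 'M[R]_n) : \det M != 0 -> conn P Q -> conn (M *m P) (M *m Q).
Proof.
move=> dM [h [hc [h0 [h1 hd]]]]; exists (fun t : R => M *m h t); split.
  by apply: cont_mul => //; exact: cst_continuous.
rewrite h0 h1; split => //; split => // t t01.
by rewrite det_mulmx mulf_neq0 // hd.
Qed.

Lemma conn_pathl n (U : R -> 'M[R]_n) (A : 'M[R]_n) : continuous U ->
  U 0 = 1%:M -> (forall t, 0 <= t <= 1 -> \det (U t) != 0) -> \det A != 0 ->
  conn A (U 1 *m A).
Proof.
move=> Uc U0 Ud dA; exists (fun t : R => U t *m A); split.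
  by apply: cont_mul => //; exact: cst_continuous.
rewrite U0 mul1mx; split => //; split => // t t01.
by rewrite det_mulmx mulf_neq0 // Ud.
Qed.

Lemma conn_pathr n (U : R -> 'M[R]_n) (A : 'M[R]_n) : continuous U ->
  U 0 = 1%:M -> (forall t, 0 <= t <= 1 -> \det (U t) != 0) -> \det A != 0 ->
  conn A (A *m U 1).
Proof.
move=> Uc U0 Ud dA; exists (fun t : R => A *m U t); split.
  by apply: cont_mul => //; exact: cst_continuous.
rewrite U0 mulmx1; split => //; split => // t t01.
by rewrite det_mulmx mulf_neq0 // Ud.
Qed.

Lemma conn_block1 n (S S' : 'M[R]_n) : conn S S' ->
  conn (block_mx (1%:M : 'M[R]_1) 0 0 S) (block_mx (1%:M : 'M[R]_1) 0 0 S').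
Proof.
move=> [h [hc [h0 [h1 hd]]]].
exists (fun t : R => block_mx (1%:M : 'M[R]_1) 0 0 (h t)); split.
  by apply: cont_block => //; exact: cst_continuous.
rewrite h0 h1; split => //; split => // t t01.
by rewrite det_ublock det1 mul1r hd.
Qed.

Lemma conn_ustep n (b : 'M[R]_(1, n)) (A : 'M[R]_(1 + n)) : \det A != 0 ->
  conn A (block_mx 1%:M b 0 1%:M *m A).
Proof.
move=> dA.
have := @conn_pathl _ (fun t : R => block_mx 1%:M (t *: b) 0 1%:M) A; rewrite /= scale1r; apply.
- apply: cont_block; try exact: cst_continuous.
  apply: cont_scale; [exact: id_cont | exact: cst_continuous].
- by rewrite scale0r -scalar_mx_block.
- by move=> t _; rewrite det_ublock !det1 mulr1 oner_neq0.
- exact: dA.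
Qed.

Lemma conn_lstep n (c : 'M[R]_(n, 1)) (A : 'M[R]_(1 + n)) : \det A != 0 ->
  conn A (block_mx 1%:M 0 c 1%:M *m A).
Proof.
move=> dA.
have := @conn_pathl _ (fun t : R => block_mx 1%:M 0 (t *: c) 1%:M) A; rewrite /= scale1r; apply.
- apply: cont_block; try exact: cst_continuous.
  apply: cont_scale; [exact: id_cont | exact: cst_continuous].
- by rewrite scale0r -scalar_mx_block.
- by move=> t _; rewrite det_lblock !det1 mulr1 oner_neq0.
- exact: dA.
Qed.

Lemma conn_ustepr n (b : 'M[R]_(1, n)) (A : 'M[R]_(1 + n)) : \det A != 0 ->
  conn A (A *m block_mx 1%:M b 0 1%:M).
Proof.
move=> dA.
have := @conn_pathr _ (fun t : R => block_mx 1%:M (t *: b) 0 1%:M) A; rewrite /= scale1r; apply.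
- apply: cont_block; try exact: cst_continuous.
  apply: cont_scale; [exact: id_cont | exact: cst_continuous].
- by rewrite scale0r -scalar_mx_block.
- by move=> t _; rewrite det_ublock !det1 mulr1 oner_neq0.
- exact: dA.
Qed.

End Conn.
Arguments conn {R n}.


Section GLp.
Context {R : realType}.

Lemma K1 n (IH : forall B : 'M[R]_n, 0 < \det B -> conn B 1%:M)
  (A : 'M[R]_(1 + n)) : 0 < \det A -> ulsubmx A = 1%:M -> conn A 1%:M.
Proof.
move=> dA ul.
set b := ursubmx A; set c := dlsubmx A; set B := drsubmx A.
have eA : A = block_mx 1%:M b c B by rewrite -ul submxK.
have dA0 : \det A != 0 by rewrite gt_eqF.
have e1 : block_mx 1%:M 0 (- c) 1%:M *m A = block_mx 1%:M b 0 (B - c *m b).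
  rewrite {1}eA mulmx_block !mul1mx !mul0mx !addr0 mulNmx mulmx1 addNr.
  by rewrite mulNmx addrC.
have d1 : \det (block_mx 1%:M b 0 (B - c *m b)) = \det A.
  by rewrite -e1 det_mulmx det_lblock !det1 !mul1r.
have e2 : block_mx 1%:M b 0 (B - c *m b) *m block_mx 1%:M (- b) 0 1%:M =
    block_mx 1%:M 0 0 (B - c *m b).
  by rewrite mulmx_block !mul1mx !mul0mx !mulmx0 !addr0 ?add0r ?mulmx1 addNr.
have dS : 0 < \det (B - c *m b).
  by move: d1; rewrite det_ublock det1 mul1r => ->.
apply: (conn_trans (conn_lstep (- c) dA0)); rewrite e1.
apply: (conn_trans (conn_ustepr (- b) _)); first by rewrite d1.
rewrite e2 (scalar_mx_block 1 n 1).
exact: conn_block1 (IH _ dS).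
Qed.


Lemma K2 n (IH : forall B : 'M[R]_n, 0 < \det B -> conn B 1%:M)
  (A : 'M[R]_(1 + n)) k : 0 < \det A -> dlsubmx A k 0 != 0 -> conn A 1%:M.
Proof.
move=> dA ck.
set a := ulsubmx A; set b := ursubmx A; set c := dlsubmx A; set B := drsubmx A.
pose l := (1 - a 0 0) / c k 0.
pose b' : 'M[R]_(1, n) := l *: delta_mx 0 k.
have dA0 : \det A != 0 by rewrite gt_eqF.
have e : block_mx 1%:M b' 0 1%:M *m A = block_mx (a + b' *m c) (b + b' *m B) c B.
  have eA : A = block_mx a b c B by rewrite submxK.
  by rewrite {1}eA mulmx_block !mul1mx !mul0mx !add0r.
apply: (conn_trans (conn_ustep b' dA0)); rewrite e.
apply: K1 => //.
  by rewrite -e det_mulmx det_ublock !det1 !mul1r.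
have hl : l * c k 0 = 1 - a 0 0 by rewrite /l divfK.
rewrite block_mxKul; apply/matrixP => i j; rewrite !ord1 /b' -scalemxAl -rowE !mxE.
by move: hl; rewrite /a /c !mxE => ->; rewrite addrC subrK.
Qed.


Lemma conn1 (A : 'M[R]_1) : 0 < \det A -> conn A 1%:M.
Proof.
move=> dA; exists (fun t : R => (1 - t) *: A + t *: 1%:M); split.
  apply: cont_add; apply: cont_scale; try exact: cst_continuous; try exact: id_cont.
  by move=> x; apply: cvgB; [exact: cvg_cst | exact: cvg_id].
rewrite subr0 scale1r scale0r addr0 subrr scale0r add0r scale1r; split => //.
split => // t /andP[t0 t1]; rewrite det_mx11 !mxE eqxx mulr1.
rewrite det_mx11 in dA; apply/lt0r_neq0; nra.
Qed.

Lemma GLstep n (IH : forall B : 'M[R]_n, 0 < \det B -> conn B 1%:M)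
  (A : 'M[R]_(1 + n)) : 0 < \det A -> conn A 1%:M.
Proof.
move=> dA.
case: (pselect (exists k, dlsubmx A k 0 != 0)) => [[k ck]|nc].
  exact: K2 ck.
have c0 : dlsubmx A = 0.
  apply/matrixP => i j; rewrite (ord1 j) [X in _ = X]mxE.
  by apply/eqP; apply/negPn/negP => h; apply: nc; exists i.
move: A dA c0 nc; case: n IH => [|n] IH A dA c0 nc.
  exact: (conn1 dA).
set a := ulsubmx A; set b := ursubmx A; set B := drsubmx A.
have eA : A = block_mx a b 0 B by rewrite -c0 submxK.
have dA0 : \det A != 0 by rewrite gt_eqF.
have da : a 0 0 != 0.
  by move: dA0; rewrite eA det_ublock det_mx11 mulf_eq0 negb_or => /andP[].
have e : block_mx 1%:M 0 (const_mx 1) 1%:M *m A =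
    block_mx a b (const_mx 1 *m a) (const_mx 1 *m b + B).
  by rewrite {1}eA mulmx_block !mul1mx !mul0mx !addr0.
apply: (conn_trans (conn_lstep (const_mx 1) dA0)).
apply: (@K2 _ IH _ ord0).
  by rewrite det_mulmx det_lblock !det1 !mul1r.
rewrite e block_mxKdl !mxE big_ord1 !mxE mul1r.
by move: da; rewrite /a !mxE.
Qed.

Lemma GLp n (A : 'M[R]_n) : 0 < \det A -> conn A 1%:M.
Proof.
elim: n A => [|n IH] A dA.
  rewrite (_ : A = 1%:M); first by apply: conn_refl; rewrite det1 oner_neq0.
  by apply/matrixP => i; case: i.
exact: (GLstep IH dA).
Qed.

End GLp.


Section GLm.
Context {R : realType}.

Definition dsgn n : 'rV[R]_n := \row_(i < n) (if (i : nat) == 0%N then -1 else 1).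
Definition Jm n : 'M[R]_n := diag_mx (dsgn n).

Lemma JJ n : Jm n *m Jm n = 1%:M.
Proof.
rewrite /Jm mulmx_diag -diag_const_mx; congr diag_mx; apply/matrixP => i j.
by rewrite !mxE; case: ifP; rewrite ?mulrNN mulr1.
Qed.

Lemma detJ n : (0 < n)%N -> \det (Jm n) = -1.
Proof.
case: n => // n _; rewrite /Jm det_diag big_ord_recl !mxE /=.
by rewrite big1 ?mulr1 // => i _; rewrite !mxE.
Qed.

Lemma GLm n (A : 'M[R]_n) : (0 < n)%N -> \det A < 0 -> conn A (Jm n).
Proof.
move=> n0 dA.
have dJ : \det (Jm n) != 0 by rewrite detJ // oppr_eq0 oner_eq0.
have h : conn (Jm n *m A) 1%:M.
  by apply: GLp; rewrite det_mulmx detJ // mulN1r oppr_gt0.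
have := conn_mull dJ h; by rewrite mulmxA JJ mul1mx mulmx1.
Qed.

Lemma conn_same n (P Q : 'M[R]_n) : (0 < n)%N ->
  (0 < \det P /\ 0 < \det Q) \/ (\det P < 0 /\ \det Q < 0) -> conn P Q.
Proof.
move=> n0 [[p q]|[p q]].
  exact: conn_trans (GLp p) (conn_sym (GLp q)).
exact: conn_trans (GLm n0 p) (conn_sym (GLm n0 q)).
Qed.

Lemma conn_global n (P Q : 'M[R]_n) : conn P Q -> exists h : R -> 'M[R]_n,
  continuous h /\ h 0 = P /\ h 1 = Q /\ forall t, \det (h t) != 0.
Proof.
move=> [h [hc [h0 [h1 hd]]]]; exists (fun t => h (clamp t)); split.
  move=> x; apply: (continuous_comp (f := fun t : R => clamp t) _ (hc _)); move: x.
  exact: clamp_cont id_cont.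
rewrite !clamp_id ?lexx ?ler01 //; split => //; split => // t.
exact/hd/clamp_in.
Qed.

End GLm.


Section Aff.
Context {R : realType}.
Variable t : R.

Definition cb m n (a b : 'M[R]_(m, n)) := (1 - t) *: a + t *: b.
Definition AF m n (E E0 E1 : 'M[R]_(m, n)) := E = cb E0 E1.

Lemma AF_cst m n (K : 'M[R]_(m, n)) : AF K K K.
Proof. by rewrite /AF /cb -scalerDl subrK scale1r. Qed.

Lemma AF_var m n (a b : 'M[R]_(m, n)) : AF (cb a b) a b.
Proof. by []. Qed.

Lemma AF_add m n (E E0 E1 F F0 F1 : 'M[R]_(m, n)) :
  AF E E0 E1 -> AF F F0 F1 -> AF (E + F) (E0 + F0) (E1 + F1).
Proof. by rewrite /AF /cb => -> ->; rewrite !scalerDr addrACA. Qed.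

Lemma AF_opp m n (E E0 E1 : 'M[R]_(m, n)) :
  AF E E0 E1 -> AF (- E) (- E0) (- E1).
Proof. by rewrite /AF /cb => ->; rewrite !scalerN opprD. Qed.

Lemma AF_mull m n p (K : 'M[R]_(m, n)) (E E0 E1 : 'M[R]_(n, p)) :
  AF E E0 E1 -> AF (K *m E) (K *m E0) (K *m E1).
Proof. by rewrite /AF /cb => ->; rewrite mulmxDr !scalemxAr. Qed.

Lemma AF_mulr m n p (K : 'M[R]_(n, p)) (E E0 E1 : 'M[R]_(m, n)) :
  AF E E0 E1 -> AF (E *m K) (E0 *m K) (E1 *m K).
Proof. by rewrite /AF /cb => ->; rewrite mulmxDl !scalemxAl. Qed.

Lemma AF_tr m n (E E0 E1 : 'M[R]_(m, n)) :
  AF E E0 E1 -> AF E^T E0^T E1^T.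
Proof. by rewrite /AF /cb => ->; rewrite linearD !linearZ. Qed.

Lemma AF_block m1 m2 n1 n2 (a a0 a1 : 'M[R]_(m1, n1)) (b b0 b1 : 'M[R]_(m1, n2))
  (c c0 c1 : 'M[R]_(m2, n1)) (d d0 d1 : 'M[R]_(m2, n2)) :
  AF a a0 a1 -> AF b b0 b1 -> AF c c0 c1 -> AF d d0 d1 ->
  AF (block_mx a b c d) (block_mx a0 b0 c0 d0) (block_mx a1 b1 c1 d1).
Proof.
by rewrite /AF /cb => -> -> -> ->; rewrite !scale_block_mx add_block_mx.
Qed.

End Aff.

Ltac af_step := match goal with
 | |- AF _ ?K ?K ?K => apply: AF_cst
 | |- AF _ (_%:M) (_%:M) (_%:M) => apply: AF_cst
 | |- AF _ (cb _ _ _) _ _ => apply: AF_var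
 | |- AF _ (_ + _) _ _ => apply: AF_add
 | |- AF _ (- _) _ _ => apply: AF_opp
 | |- AF _ (block_mx _ _ _ _) _ _ => apply: AF_block
 | |- AF _ (_^T) _ _ => apply: AF_tr
 | |- AF _ (_ *m ?K) _ (_ *m ?K) => apply: AF_mulr
 | |- AF _ (?K *m _) (?K *m _) _ => apply: AF_mull
 end.
Ltac af := do 12 (try af_step).

Section Conv.
Context {R : realType}.

Lemma posdef_comb n (M0 M1 : 'M[R]_n) t : 0 <= t <= 1 ->
  posdef M0 -> posdef M1 -> posdef ((1 - t) *: M0 + t *: M1).
Proof.
move=> /andP[t0 t1] [s0 q0] [s1 q1]; split.
  by rewrite linearD !linearZ /= s0 s1.
move=> v v0; rewrite mulmxDr mulmxDl -!scalemxAr -!scalemxAl.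
have := q0 v v0; have := q1 v v0.
set a := v^T *m M0 *m v; set b := v^T *m M1 *m v.
rewrite !mxE; nra.
Qed.

Lemma negdef_comb n (M0 M1 : 'M[R]_n) t : 0 <= t <= 1 ->
  negdef M0 -> negdef M1 -> negdef (cb t M0 M1).
Proof.
move=> t01 h0 h1; rewrite /negdef /cb opprD -!scalerN.
exact: posdef_comb.
Qed.

Variables (nx nw nu nz ny : nat).
Variables (A : 'M[R]_nx) (B1 : 'M[R]_(nx, nw)) (B2 : 'M[R]_(nx, nu))
  (C1 : 'M[R]_(nz, nx)) (C2 : 'M[R]_(ny, nx)) (D11 : 'M[R]_(nz, nw))
  (D12 : 'M[R]_(nz, nu)) (D21 : 'M[R]_(ny, nw)).

Lemma Mgamma_AF gamma t (X0 Y0 Ah0 : 'M[R]_nx) (Bh0 : 'M[R]_(nx, ny)) (Ch0 : 'M[R]_(nu, nx))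
  (Dh0 : 'M[R]_(nu, ny)) (X1 Y1 Ah1 : 'M[R]_nx) (Bh1 : 'M[R]_(nx, ny))
  (Ch1 : 'M[R]_(nu, nx)) (Dh1 : 'M[R]_(nu, ny)) :
  AF t (Mgamma A B1 B2 C1 C2 D11 D12 D21 gamma (cb t X0 X1) (cb t Y0 Y1) (cb t Ah0 Ah1)
    (cb t Bh0 Bh1) (cb t Ch0 Ch1) (cb t Dh0 Dh1))
  (Mgamma A B1 B2 C1 C2 D11 D12 D21 gamma X0 Y0 Ah0 Bh0 Ch0 Dh0)
  (Mgamma A B1 B2 C1 C2 D11 D12 D21 gamma X1 Y1 Ah1 Bh1 Ch1 Dh1).
Proof.
rewrite /Mgamma /=.
by do 8 (try af_step).
Qed.

Lemma Fconv gamma t (X0 Y0 Ah0 : 'M[R]_nx) (Bh0 : 'M[R]_(nx, ny)) (Ch0 : 'M[R]_(nu, nx))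
  (Dh0 : 'M[R]_(nu, ny)) (X1 Y1 Ah1 : 'M[R]_nx) (Bh1 : 'M[R]_(nx, ny))
  (Ch1 : 'M[R]_(nu, nx)) (Dh1 : 'M[R]_(nu, ny)) : 0 <= t <= 1 ->
  Fgamma A B1 B2 C1 C2 D11 D12 D21 gamma X0 Y0 Ah0 Bh0 Ch0 Dh0 ->
  Fgamma A B1 B2 C1 C2 D11 D12 D21 gamma X1 Y1 Ah1 Bh1 Ch1 Dh1 ->
  Fgamma A B1 B2 C1 C2 D11 D12 D21 gamma (cb t X0 X1) (cb t Y0 Y1) (cb t Ah0 Ah1)
    (cb t Bh0 Bh1) (cb t Ch0 Ch1) (cb t Dh0 Dh1).
Proof.
move=> t01 [sX0 [sY0 [p0 n0]]] [sX1 [sY1 [p1 n1]]].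
split; first by rewrite /cb linearD !linearZ /= sX0 sX1.
split; first by rewrite /cb linearD !linearZ /= sY0 sY1.
split.
  have -> : block_mx (cb t X0 X1) 1%:M 1%:M (cb t Y0 Y1) =
    cb t (block_mx X0 1%:M 1%:M Y0) (block_mx X1 1%:M 1%:M Y1).
    by change (AF t (block_mx (cb t X0 X1) 1%:M 1%:M (cb t Y0 Y1)) (block_mx X0 1%:M 1%:M Y0) (block_mx X1 1%:M 1%:M Y1)); af.
  exact: posdef_comb.
rewrite (Mgamma_AF gamma t X0 Y0 Ah0 Bh0 Ch0 Dh0 X1 Y1 Ah1 Bh1 Ch1 Dh1).
exact: negdef_comb.
Qed.

End Conv.


Section L1.
Context {R : realType}.

Lemma IYX_det n (X Y : 'M[R]_n) : X^T = X -> Y^T = Y ->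
  posdef (block_mx X 1%:M 1%:M Y) -> \det (1%:M - Y *m X) != 0.
Proof.
move=> sX sY [_ pd]; apply/negP => /det0P [v v0 hv].
have hv' : v *m Y *m X = v.
  by move/eqP: hv; rewrite mulmxBr mulmx1 subr_eq0 mulmxA => /eqP <-.
set w := v *m Y.
set u := col_mx w^T (- v^T).
have u0 : u != 0.
  apply: contra v0 => /eqP u0; have := congr1 dsubmx u0.
  rewrite col_mxKd (_ : dsubmx (0 : 'M[R]_(n + n, 1)) = 0); last by apply/matrixP => i j; rewrite !mxE.
  move=> /eqP; rewrite oppr_eq0 => /eqP h.
  by rewrite -(trmxK v) h trmx0.
have := pd u u0.
rewrite /u tr_col_mx linearN /= !trmxK mul_row_block !mulmx1 mulNmx.
rewrite /w hv' !subrr.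
by rewrite (_ : row_mx 0 0 = 0) ?mul0mx ?mxE ?ltxx // row_mx0.
Qed.

End L1.


Section Prod.
Lemma cont_pair (T U V : topologicalType) (f : T -> U) (g : T -> V) :
  continuous f -> continuous g -> continuous (fun t => (f t, g t)).
Proof. by move=> fc gc x; apply: cvg_pair; [exact: fc | exact: gc]. Qed.

Lemma cont_fst (U V : topologicalType) : continuous (@fst U V).
Proof. by move=> x; exact: cvg_fst. Qed.

Lemma cont_snd (U V : topologicalType) : continuous (@snd U V).
Proof. by move=> x; exact: cvg_snd. Qed.
End Prod.

Section Gp.
Context {R : realType}.
Variables (nx nu ny : nat).

Lemma detPi_cont : continuous (fun p : Gpoint R nx nu ny => \det p.1.2).
Proof.
apply: cont_det => x.
apply: (continuous_comp (f := fun p : Gpoint R nx nu ny => p.1)).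
  exact: cont_fst.
exact: cont_snd.
Qed.

Lemma within_det (f : R -> Gpoint R nx nu ny) :
  {within `[0, 1], continuous f} ->
  {within `[0, 1], continuous (fun t => \det (f t).1.2)}.
Proof.
move=> fc x.
have := continuous_comp (fc x) (@detPi_cont (f x)). apply.
Qed.

End Gp.

Section Main.
Context {R : realType}.
Variables (nx nw nu nz ny : nat).
Variables (A : 'M[R]_nx) (B1 : 'M[R]_(nx, nw)) (B2 : 'M[R]_(nx, nu))
  (C1 : 'M[R]_(nz, nx)) (C2 : 'M[R]_(ny, nx)) (D11 : 'M[R]_(nz, nw))
  (D12 : 'M[R]_(nz, nu)) (D21 : 'M[R]_(ny, nw)) (gamma : R).

Let G := Ggamma A B1 B2 C1 C2 D11 D12 D21 gamma.

Lemma G_det p : G p -> \det p.1.2 != 0.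
Proof.
case: p => [[[[[[[X Y] Ah] Bh] Ch] Dh] Pi] Xi] /= [[sX [sY [pd nd]]] e].
have := IYX_det sX sY pd; rewrite -e det_mulmx mulf_eq0 negb_or.
by case/andP.
Qed.

Lemma cont_cb m n (a b : 'M[R]_(m, n)) : continuous (fun s : R => cb s a b).
Proof.
apply: cont_add; apply: cont_scale; try exact: cst_continuous; try exact: id_cont.
by move=> x; apply: cvgB; [exact: cvg_cst | exact: cvg_id].
Qed.

Lemma cb0 m n (a b : 'M[R]_(m, n)) : cb 0 a b = a.
Proof. by rewrite /cb subr0 scale1r scale0r addr0. Qed.

Lemma cb1 m n (a b : 'M[R]_(m, n)) : cb 1 a b = b.
Proof. by rewrite /cb subrr scale0r add0r scale1r. Qed.

Lemma unit_det n (M : 'M[R]_n) : \det M != 0 -> M \in unitmx.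
Proof. by move=> d; rewrite unitmxE unitfE. Qed.

Lemma G_path p0 p1 : (0 < nx)%N -> G p0 -> G p1 ->
  (0 < \det p0.1.2 /\ 0 < \det p1.1.2) \/ (\det p0.1.2 < 0 /\ \det p1.1.2 < 0) ->
  path_in R G p0 p1.
Proof.
move=> n0 Gp0 Gp1 sg.
have d0 := G_det Gp0; have d1 := G_det Gp1.
move: Gp0 Gp1 sg d0 d1.
case: p0 => [[[[[[[X0 Y0] Ah0] Bh0] Ch0] Dh0] Pi0] Xi0].
case: p1 => [[[[[[[X1 Y1] Ah1] Bh1] Ch1] Dh1] Pi1] Xi1] /= [F0 e0] [F1 e1] sg d0 d1.
have [h [hc [h0 [h1 hd]]]] := conn_global (conn_same n0 sg).
exists (fun s => (cb s X0 X1, cb s Y0 Y1, cb s Ah0 Ah1, cb s Bh0 Bh1, cb s Ch0 Ch1,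
  cb s Dh0 Dh1, h s, (1%:M - cb s Y0 Y1 *m cb s X0 X1) *m invmx (h s))).
split.
  apply: continuous_subspaceT.
  apply: cont_pair; last first.
    apply: cont_mul; last exact: cont_inv.
    by apply: cont_sub; [exact: cst_continuous | apply: cont_mul; exact: cont_cb].
  apply: cont_pair; last exact: hc.
  do 5 (apply: cont_pair; last exact: cont_cb).
  exact: cont_cb.
rewrite !cb0 !cb1 h0 h1 -e0 -e1 (mulmxK (unit_det d0)) (mulmxK (unit_det d1)).
split; first by []. split; first by [].
move=> t t01; split.
  exact: (Fconv t01 F0 F1).
exact: (mulmxKV (unit_det (hd t))).
Qed.

End Main.


Section Main2.
Context {R : realType}.
Variables (nx nw nu nz ny : nat).
Variables (A : 'M[R]_nx) (B1 : 'M[R]_(nx, nw)) (B2 : 'M[R]_(nx, nu))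
  (C1 : 'M[R]_(nz, nx)) (C2 : 'M[R]_(ny, nx)) (D11 : 'M[R]_(nz, nw))
  (D12 : 'M[R]_(nz, nu)) (D21 : 'M[R]_(ny, nw)) (gamma : R).

Let G := Ggamma A B1 B2 C1 C2 D11 D12 D21 gamma.
Let Gp := Ggamma_plus A B1 B2 C1 C2 D11 D12 D21 gamma.
Let Gm := Ggamma_minus A B1 B2 C1 C2 D11 D12 D21 gamma.

Lemma no_cross p q : path_in R G p q ->
  Num.min (\det p.1.2) (\det q.1.2) <= 0 <= Num.max (\det p.1.2) (\det q.1.2) -> False.
Proof.
move=> [f [fc [f0 [f1 fS]]]] mm.
have gc := within_det fc.
have mm' : Num.min (\det (f 0).1.2) (\det (f 1).1.2) <= 0 <=
   Num.max (\det (f 0).1.2) (\det (f 1).1.2) by rewrite f0 f1.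
have [c c01 gc0] := IVT ler01 gc mm'.
move: c01; rewrite in_itv /= => c01.
have := G_det (fS c c01); rewrite gc0.
by rewrite eqxx.
Qed.

Lemma path_end p q : path_in R G p q -> G q.
Proof.
by move=> [f [fc [f0 [f1 fS]]]]; rewrite -f1; apply: fS; rewrite ler01 lexx.
Qed.

Lemma comp_plus p : (0 < nx)%N -> Gp p -> Gp = path_component R G p.
Proof.
move=> n0 [Gp0 dp]; apply/seteqP; split => q /=.
  move=> [Gq dq]; split => //; apply: G_path => //; left; split => //.
move=> [_ pq]; have Gq := path_end pq; split => //.
have := G_det Gq; rewrite neq_lt => /orP[dq|//].
exfalso; apply: (no_cross pq).
by rewrite ge_min le_max (ltW dq) (ltW dp) orbT.
Qed.

Lemma comp_minus p : (0 < nx)%N -> Gm p -> Gm = path_component R G p.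
Proof.
move=> n0 [Gp0 dp]; apply/seteqP; split => q /=.
  move=> [Gq dq]; split => //; apply: G_path => //; right; split => //.
move=> [_ pq]; have Gq := path_end pq; split => //.
have := G_det Gq; rewrite neq_lt => /orP[//|dq].
exfalso; apply: (no_cross pq).
by rewrite ge_min le_max (ltW dq) (ltW dp) orbT.
Qed.

End Main2.


Unset Implicit Arguments. Set Strict Implicit.

Theorem proposition2 (R : realType) (nx nw nu nz ny : nat)
  (A : 'M[R]_nx) (B1 : 'M[R]_(nx, nw)) (B2 : 'M[R]_(nx, nu))
  (C1 : 'M[R]_(nz, nx)) (C2 : 'M[R]_(ny, nx)) (D11 : 'M[R]_(nz, nw))
  (D12 : 'M[R]_(nz, nu)) (D21 : 'M[R]_(ny, nw)) (gamma : R) :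
  (0 < nx)%N ->
  stabilizable A B2 -> detectable C2 A ->
  0 < gamma ->
  (exists (X Y Ah : 'M[R]_nx) (Bh : 'M[R]_(nx, ny)) (Ch : 'M[R]_(nu, nx))
     (Dh : 'M[R]_(nu, ny)),
     Fgamma A B1 B2 C1 C2 D11 D12 D21 gamma X Y Ah Bh Ch Dh) ->
  forall C : set (Gpoint R nx nu ny),
    @is_path_component R _ (Ggamma A B1 B2 C1 C2 D11 D12 D21 gamma) C <->
    (C = Ggamma_plus A B1 B2 C1 C2 D11 D12 D21 gamma \/
     C = Ggamma_minus A B1 B2 C1 C2 D11 D12 D21 gamma).
Proof.
move=> n0 _ _ _ [X [Y [Ah [Bh [Ch [Dh FF]]]]]] C.
pose pp : Gpoint R nx nu ny := (X, Y, Ah, Bh, Ch, Dh, 1%:M, 1%:M - Y *m X).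
pose pm : Gpoint R nx nu ny := (X, Y, Ah, Bh, Ch, Dh, Jm nx, (1%:M - Y *m X) *m Jm nx).
have Hpp : Ggamma_plus A B1 B2 C1 C2 D11 D12 D21 gamma pp.
  split; first by split => //; rewrite mulmx1.
  by rewrite /= det1 ltr01.
have Hpm : Ggamma_minus A B1 B2 C1 C2 D11 D12 D21 gamma pm.
  split; first by split => //; rewrite -mulmxA JJ mulmx1.
  by rewrite /= detJ // ltrN10.
split.
  move=> [p [Gp0 ->]]; have := G_det Gp0; rewrite neq_lt => /orP[d|d].
    by right; symmetry; apply: comp_minus.
  by left; symmetry; apply: comp_plus.
move=> [->|->].
  by exists pp; split; [exact: Hpp.1 | exact: comp_plus].
by exists pm; split; [exact: Hpm.1 | exact: comp_minus].
Qed.
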